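(* Let $Q$ be a symmetric GAP in an additive group $G$ with rank $d$, and let $\mathbf{v} = (v_1,\ldots,v_n)$ be such that $v_1,\ldots,v_n \in Q$. Let $0 < \mu \le 1$. Then $$\mathbf{P}_\mu(\mathbf{v}) \gg_d |Q_{\sqrt{\mu n}}|^{-1} \gg_d (1+\mu n)^{-d/2} |Q|^{-1}.$$
   Context: For $0 \le \mu \le 1$, let $\eta^\mu$ be the random variable equal to $0$ with probability $1-\mu$ and to each of $+1,-1$ with probability $\mu/2$; let $\eta^\mu_1,\dots,\eta^\mu_n$ be iid copies. The lazy random walk is $S^\mu(\mathbf{v}) = v_1\eta^\mu_1 + \dots + v_n \eta^\mu_n$ and the concentration probability is $\mathbf{P}_\mu(\mathbf{v}) = \max_{a\in G} \mathbf{P}(S^\mu(\mathbf{v}) = a)$. A symmetric GAP of rank $d$ with dimensions $N_1,\dots,N_d>0$ (reals) and steps $w_1,\dots,w_d \in G$ is the set $Q=\{\sum_{i=1}^d n_i w_i : n_i \in \mathbb{Z}, -N_i \le n_i \le N_i\}$ (together with these data). For $t>0$, the dilate $Q_t$ is the symmetric GAP with the same steps and dimensions $tN_1,\dots,tN_d$. $|Q|$ denotes cardinality. Notation: $X \gg_d Y$ means $Y \le C X$ for some constant $C$ depending only on $d$ (for all $n \ge C$). *)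

(* Defs.v *)
From Stdlib Require Rdefinitions.
From HB Require Import structures.
From mathcomp Require Import all_boot all_order all_algebra.
From mathcomp Require Import Rstruct.
Set Implicit Arguments. Unset Strict Implicit. Unset Printing Implicit Defensive.
Import Order.TTheory GRing.Theory Num.Theory.
Local Open Scope ring_scope.

Definition R := Rdefinitions.R.

(* A symmetric GAP of rank d is given by dimensions N : 'I_d -> R (all > 0)
   and steps w : 'I_d -> G. *)

Definition gap_eval (G : zmodType) (d : nat) (w : 'I_d -> G) (m : 'I_d -> int) : G :=
  \sum_(i < d) (w i *~ m i).

Definition in_GAP (G : zmodType) (d : nat) (N : 'I_d -> R) (w : 'I_d -> G) (x : G) : Prop :=
  exists m : 'I_d -> int,
    (forall i, - N i <= (m i)%:~R /\ (m i)%:~R <= N i) /\ x = gap_eval w m.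

Definition gap_bound (d : nat) (N : 'I_d -> R) : nat :=
  \max_(i < d) `|Num.floor (N i)|%N.

(* coefficient vector encoded by f : 'I_d -> 'I_(2M+1), shifted by -M *)
Definition gap_coef (d : nat) (N : 'I_d -> R) (f : {ffun 'I_d -> 'I_(2 * gap_bound N).+1})
  : 'I_d -> int := fun i => (val (f i))%:Z - (gap_bound N)%:Z.

(* the (finite) list of all elements of Q, possibly with repetitions *)
Definition gap_points (G : zmodType) (d : nat) (N : 'I_d -> R) (w : 'I_d -> G) : seq G :=
  [seq gap_eval w (@gap_coef d N f) |
     f <- enum {ffun 'I_d -> 'I_(2 * gap_bound N).+1} &
     [forall i, (- N i <= (@gap_coef d N f i)%:~R) && ((@gap_coef d N f i)%:~R <= N i)]].

Definition gap_card (G : zmodType) (d : nat) (N : 'I_d -> R) (w : 'I_d -> G) : nat :=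
  size (undup (gap_points N w)).

Definition gap_dilate (d : nat) (t : R) (N : 'I_d -> R) : 'I_d -> R := fun i => t * N i.

(* an outcome of (eta_1,...,eta_n) is e : {ffun 'I_n -> 'I_3}, where
   the value k : 'I_3 encodes eta = k - 1 in {-1,0,1} *)
Definition eta_val (k : 'I_3) : int := (val k)%:Z - 1.

Definition eta_weight (mu : R) (k : 'I_3) : R :=
  if val k == 1%N then 1 - mu else mu / 2.

Definition walk (G : zmodType) (n : nat) (v : 'I_n -> G) (e : {ffun 'I_n -> 'I_3}) : G :=
  \sum_(i < n) (v i *~ eta_val (e i)).

Definition walk_prob (G : zmodType) (n : nat) (mu : R) (v : 'I_n -> G) (a : G) : R :=
  \sum_(e : {ffun 'I_n -> 'I_3} | walk v e == a) \prod_(i < n) eta_weight mu (e i).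

(* P_mu(v) = max_a P(S^mu(v) = a); the maximum over a in G is attained on the
   (finite) set of values of the walk, so we take it over those values. *)
Definition conc_prob (G : zmodType) (n : nat) (mu : R) (v : 'I_n -> G) : R :=
  \big[Num.max/0]_(e : {ffun 'I_n -> 'I_3}) walk_prob mu v (walk v e).

(* Main.v *)
Require Import Defs.
From HB Require Import structures.
From mathcomp Require Import all_boot all_order all_algebra.
From mathcomp Require Import Rstruct.
From mathcomp Require Import zify ring lra.
From Stdlib Require Import ClassicalEpsilon.
Import Order.TTheory GRing.Theory Num.Theory.
Local Open Scope ring_scope.

Lemma gap_evalD (G : zmodType) d (w : 'I_d -> G) (a b : 'I_d -> int) :
  gap_eval w (fun i => a i + b i) = gap_eval w a + gap_eval w b.
Proof. by rewrite /gap_eval -big_split /=; apply: eq_bigr => i _; rewrite mulrzDr. Qed.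

Lemma int_le_floor (x : R) (c : int) : c%:~R <= x -> c <= Num.floor x.
Proof. by rewrite floor_ge_int. Qed.

Lemma mem_gap_points (G : zmodType) d (N : 'I_d -> R) (w : 'I_d -> G) x :
  x \in gap_points N w <-> in_GAP N w x.
Proof.
split.
  case/mapP => f; rewrite mem_filter => /andP[/forallP Hf _] ->.
  exists (gap_coef f); split => // i; by have /andP[] := Hf i.
case=> m [Hm ->].
have Hb i : (`|m i| <= gap_bound N)%N.
  have [H1 H2] := Hm i.
  have h1 : m i <= Num.floor (N i) by apply: int_le_floor.
  have h2 : - m i <= Num.floor (N i) by apply: int_le_floor; rewrite intrN lerNl.
  apply: (@leq_trans `|Num.floor (N i)|%N); last first.
    rewrite /gap_bound; exact: (@leq_bigmax _ (fun i => `|Num.floor (N i)|%N) i).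
  have : 0 <= Num.floor (N i) by lia.
  lia.
pose f := [ffun i => (inord (absz (m i + (gap_bound N)%:Z)) : 'I_(2 * gap_bound N).+1)].
have Hf i : gap_coef f i = m i.
  rewrite /gap_coef ffunE /= inordK; first by have := Hb i; lia.
  have := Hb i; lia.
apply/mapP; exists f; last first.
  by rewrite /gap_eval; apply: eq_bigr => i _; rewrite Hf.
rewrite mem_filter mem_enum andbT; apply/forallP => i; rewrite Hf.
by have [-> ->] := Hm i.
Qed.
Lemma qbound {m f M q r : int} : 0 <= f -> 0 < M -> - (M*(f+1)) < m -> m < M*(f+1) ->
  m + f = q * (2*f+1) + r -> 0 <= r -> r < 2*f+1 -> -M <= q /\ q <= M.
Proof.
move=> h1 h2 h3 h4 h5 h6 h7; split.
- case: (lerP (-M) q) => // hq. have : q * (2*f+1) <= (-M-1)*(2*f+1) by apply: ler_wpM2r; lia. nia.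
- case: (lerP q M) => // hq. have : (M+1)*(2*f+1) <= q * (2*f+1) by apply: ler_wpM2r; lia. nia.
Qed.

Lemma size_undup_gap_pos (G : zmodType) d (N : 'I_d -> R) (w : 'I_d -> G) :
  (forall i, 0 <= N i) -> (0 < gap_card N w)%N.
Proof.
move=> HN; rewrite /gap_card; have : (0 : G) \in undup (gap_points N w).
  rewrite mem_undup; apply/mem_gap_points; exists (fun _ => 0); split.
    by move=> i; rewrite oppr_le0 HN.
  by rewrite /gap_eval big1 // => i _; rewrite mulr0z.
by case: (undup _).
Qed.

Lemma cover (G : zmodType) d (N N' : 'I_d -> R) (w : 'I_d -> G) (M : nat) :
  (0 < M)%N -> (forall i, 0 <= N i) -> (forall i, N' i <= M%:R * N i) ->
  (gap_card N' w <= (2 * M + 1) ^ d * gap_card N w)%N.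
Proof.
move=> M0 HN HN'.
pose f i := Num.floor (N i).
have f0 i : 0 <= f i by rewrite floor_ge0.
pose p i := 2 * f i + 1.
pose X := [seq gap_eval w (fun i => ((val (b i))%:Z - M%:Z) * p i) |
            b : {ffun 'I_d -> 'I_(2 * M).+1} <- enum {ffun 'I_d -> 'I_(2 * M).+1}].
have sX : size X = ((2 * M + 1) ^ d)%N.
  by rewrite size_map -cardE card_ffun !card_ord addn1.
rewrite /gap_card -sX -(size_allpairs (fun x y : G => x + y)).
apply: uniq_leq_size; first exact: undup_uniq.
move=> z; rewrite mem_undup => /mem_gap_points [m [Hm ->]].
have Hlt i : - (M%:Z * (f i + 1)) < m i /\ m i < M%:Z * (f i + 1).
  have key : M%:R * N i < ((M%:Z * (f i + 1)))%:~R.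
    rewrite intrM -[(M%:Z)%:~R]/(M%:R : R) ltr_pM2l ?ltr0n //.
    exact: floorD1_gt.
  have [H1 H2] := Hm i; split.
    rewrite -(ltr_int R) intrN ltrNl; apply: le_lt_trans key.
    by apply: le_trans (HN' i); rewrite lerNl.
  by rewrite -(ltr_int R); apply: le_lt_trans key; exact: le_trans H2 (HN' i).
pose q i := ((m i + f i) %/ p i)%Z.
pose r i := ((m i + f i) %% p i)%Z.
have p0 i : 0 < p i by rewrite /p; have := f0 i; lia.
have Hqr i : m i + f i = q i * p i + r i by exact: divz_eq.
have Hr i : 0 <= r i /\ r i < p i.
  split; [apply: modz_ge0; have := p0 i; lia | exact: ltz_pmod].
have Hq i : - M%:Z <= q i /\ q i <= M%:Z.
  have [a1 a2] := Hlt i; have [b1 b2] := Hr i.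
  have M0' : 0 < M%:Z by lia.
  exact: (qbound (f0 i) M0' a1 a2 (Hqr i) b1 b2).
pose b := [ffun i => (inord (absz (q i + M%:Z)) : 'I_(2 * M).+1)].
have Hb i : (val (b i))%:Z - M%:Z = q i.
  rewrite ffunE /= inordK; have := Hq i; lia.
have -> : gap_eval w m = gap_eval w (fun i => ((val (b i))%:Z - M%:Z) * p i)
                         + gap_eval w (fun i => r i - f i).
  rewrite -gap_evalD /gap_eval; apply: eq_bigr => i _; congr (_ *~ _).
  rewrite Hb; have := Hqr i; lia.
apply: allpairs_f; first by apply: map_f; rewrite mem_enum.
rewrite mem_undup; apply/mem_gap_points; exists (fun i => r i - f i); split => //.
move=> i; have fl := floor_le (N i); have [c1 c2] := Hr i.
have e1 : - f i <= r i - f i by lia.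
have e2 : r i - f i <= f i by rewrite /p in c2; lia.
split.
  by apply: le_trans (_ : (- f i)%:~R <= _); [rewrite intrN lerN2 | rewrite ler_int].
by apply: le_trans fl; rewrite ler_int.
Qed.

Definition W (n : nat) (mu : R) (e : {ffun 'I_n -> 'I_3}) : R :=
  \prod_(i < n) eta_weight mu (e i).

Lemma key_prod {n} (g : 'I_n -> 'I_3 -> R) :
  \sum_(e : {ffun 'I_n -> 'I_3}) \prod_i g i (e i) = \prod_i \sum_(k < 3) g i k.
Proof. by rewrite bigA_distr_bigA. Qed.

Lemma sum3 (F : 'I_3 -> R) : \sum_(k < 3) F k = F (@Ordinal 3 0 isT) + F (@Ordinal 3 1 isT) + F (@Ordinal 3 2 isT).
Proof.
rewrite !big_ord_recr big_ord0 /=.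
have -> : forall x : R, 0 + x = x by move=> x; rewrite add0r.
by congr (_ + _ + _); congr F; apply: val_inj.
Qed.

Lemma W_ge0 n mu e : 0 <= mu -> mu <= 1 -> 0 <= W n mu e.
Proof.
move=> h0 h1; apply: prodr_ge0 => i _; rewrite /eta_weight; case: ifP => _.
  by rewrite subr_ge0.
by apply: divr_ge0 => //; rewrite ler0n.
Qed.

Lemma sumW n mu : \sum_e W n mu e = 1.
Proof.
rewrite /W (@key_prod n (fun _ k => eta_weight mu k)); apply: big1 => i _; rewrite sum3 /eta_weight /=.
lra.
Qed.

Definition etaR (k : 'I_3) : R := (eta_val k)%:~R.

Lemma prod_if {n} (a : 'I_n -> R) j : \prod_i (if i == j then a i else 1) = a j.
Proof. by rewrite -big_mkcond big_pred1_eq. Qed.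

Lemma Ecross n mu (j l : 'I_n) :
  \sum_e W n mu e * etaR (e j) * etaR (e l) = if j == l then mu else 0.
Proof.
pose g i k := eta_weight mu k * (if i == j then etaR k else 1) * (if i == l then etaR k else 1).
have -> : \sum_e W n mu e * etaR (e j) * etaR (e l) = \sum_(e : {ffun 'I_n -> 'I_3}) \prod_i g i (e i).
  apply: eq_bigr => e _; rewrite /g !big_split /=.
  by rewrite (prod_if (fun i => etaR (e i))) (prod_if (fun i => etaR (e i))).
rewrite key_prod (bigD1 j) //=.
have hj : \sum_(k < 3) g j k = if j == l then mu else 0.
  rewrite sum3 /g /etaR /eta_weight /= eqxx.
  case: eqP => _ /=; rewrite /eta_val /=; lra.
rewrite hj; case: eqP => [E|_]; last by rewrite mul0r.
subst l.
rewrite big1 ?mulr1 // => i /negbTE ij; rewrite sum3 /g /etaR /eta_weight /= ij /=; lra.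
Qed.

Lemma E2 n mu (a : 'I_n -> R) :
  \sum_e W n mu e * (\sum_j a j * etaR (e j)) ^+ 2 = mu * \sum_j a j ^+ 2.
Proof.
have -> : \sum_e W n mu e * (\sum_j a j * etaR (e j)) ^+ 2 =
          \sum_e \sum_j \sum_l a j * a l * (W n mu e * etaR (e j) * etaR (e l)).
  apply: eq_bigr => e _; rewrite expr2 mulr_suml mulr_sumr; apply: eq_bigr => j _.
  rewrite mulr_sumr mulr_sumr; apply: eq_bigr => l _; ring.
rewrite exchange_big /=; rewrite mulr_sumr; apply: eq_bigr => j _.
rewrite exchange_big /=; rewrite (bigD1 j) //= -mulr_sumr Ecross eqxx big1 ?addr0.
  by rewrite expr2 mulrC.
by move=> l /negbTE lj; rewrite -mulr_sumr Ecross eq_sym lj mulr0.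
Qed.

Lemma markov_union n d mu (X : 'I_d -> {ffun 'I_n -> 'I_3} -> R) (T : 'I_d -> R) :
  0 <= mu -> mu <= 1 -> (forall i, 0 < T i) ->
  \sum_(e | ~~ [forall i, X i e ^+ 2 <= T i]) W n mu e <=
  \sum_i (\sum_e W n mu e * X i e ^+ 2) / T i.
Proof.
move=> h0 h1 hT.
pose Y e := \sum_i X i e ^+ 2 / T i.
have Y0 e : 0 <= Y e.
  by apply: sumr_ge0 => i _; apply: divr_ge0; [apply: sqr_ge0 | apply: ltW].
have -> : \sum_i (\sum_e W n mu e * X i e ^+ 2) / T i = \sum_e W n mu e * Y e.
  under eq_bigr do rewrite mulr_suml.
  rewrite exchange_big /=; apply: eq_bigr => e _; rewrite /Y mulr_sumr.
  apply: eq_bigr => i _; by rewrite mulrA.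
apply: (@le_trans _ _ (\sum_(e | ~~ [forall i, X i e ^+ 2 <= T i]) W n mu e * Y e)).
  apply: ler_sum => e /forallPn [i]; rewrite -ltNge => hi.
  rewrite -{1}(mulr1 (W n mu e)); apply: ler_wpM2l; first exact: W_ge0.
  rewrite /Y (bigD1 i) //=; apply: le_trans (_ : X i e ^+ 2 / T i <= _).
    by rewrite ler_pdivlMr ?mul1r ?hT // ltW.
  by rewrite lerDl; apply: sumr_ge0 => k _; apply: divr_ge0; [apply: sqr_ge0 | apply: ltW].
rewrite [X in _ <= X](bigID (fun e => ~~ [forall i, X i e ^+ 2 <= T i])) /= lerDl.
by apply: sumr_ge0 => e _; apply: mulr_ge0; [apply: W_ge0 | apply: Y0].
Qed.

Lemma conc_ge0 (G : zmodType) n mu (v : 'I_n -> G) : 0 <= conc_prob mu v.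
Proof. exact: bigmax_ge_id. Qed.

Lemma walk_le_conc (G : zmodType) n mu (v : 'I_n -> G) a :
  walk_prob mu v a <= conc_prob mu v.
Proof.
case: (pickP (fun e => walk v e == a)) => [e /eqP <-|H].
  exact: (le_bigmax _ (fun e => walk_prob mu v (walk v e)) e).
rewrite /walk_prob big1 ?conc_ge0 // => e; by rewrite H.
Qed.

Lemma pigeon (G : zmodType) n mu (v : 'I_n -> G) (good : pred {ffun 'I_n -> 'I_3}) (U : seq G) :
  0 <= mu -> mu <= 1 -> uniq U -> (forall e, good e -> walk v e \in U) ->
  \sum_(e | good e) W n mu e <= (size U)%:R * conc_prob mu v.
Proof.
move=> h0 h1 uU hU.
apply: (@le_trans _ _ (\sum_(a <- U) walk_prob mu v a)); last first.
  apply: (@le_trans _ _ (\sum_(a <- U) conc_prob mu v)).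
    by apply: ler_sum => a _; apply: walk_le_conc.
  suff -> : forall s : seq G, \sum_(a <- s) conc_prob mu v = (size s)%:R * conc_prob mu v by [].
  elim=> [|x s IH]; first by rewrite big_nil mul0r.
  by rewrite big_cons /= IH -addn1 natrD mulrDl mul1r addrC.
apply: (@le_trans _ _ (\sum_e W n mu e * \sum_(a <- U) (walk v e == a)%:R)).
  rewrite big_mkcond /=; apply: ler_sum => e _; case: ifP => ge; last first.
    by apply: mulr_ge0; [apply: W_ge0 | apply: sumr_ge0 => a _; apply: ler0n].
  rewrite -{1}(mulr1 (W n mu e)); apply: ler_wpM2l; first exact: W_ge0.
  rewrite (big_rem (walk v e)) ?hU //= eqxx lerDl.
  by apply: sumr_ge0 => a _; apply: ler0n.
rewrite /walk_prob; under eq_bigr do rewrite mulr_sumr.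
rewrite exchange_big /= le_eqVlt; apply/orP; left; apply/eqP.
apply: eq_bigr => a _; rewrite [RHS]big_mkcond /=; apply: eq_bigr => e _.
by case: eqP => _; rewrite ?mulr1 ?mulr0.
Qed.

Lemma walk_eq (G : zmodType) n d (w : 'I_d -> G) (v : 'I_n -> G) (m : 'I_n -> 'I_d -> int) e :
  (forall j, v j = gap_eval w (m j)) ->
  walk v e = gap_eval w (fun i => \sum_j m j i * eta_val (e j)).
Proof.
move=> hv; rewrite /walk /gap_eval.
under eq_bigr do rewrite hv /gap_eval mulrz_suml.
rewrite exchange_big /=; apply: eq_bigr => i _.
by rewrite mulrz_sumr; apply: eq_bigr => j _; rewrite mulrzA.
Qed.

Lemma sq_bound (x y : R) : x ^+ 2 <= y ^+ 2 -> 0 <= y -> - y <= x /\ x <= y.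
Proof. move=> h1 h2; split; nra. Qed.

Lemma help1 (Q D P C : R) : 0 < Q -> 0 <= P -> 1/2 <= D*Q*P -> 2*D <= C -> Q^-1 <= C * P.
Proof.
move=> hQ hP h1 h2.
have uQ : Q^-1 * Q = 1 by rewrite mulVf // gt_eqF.
have u0 : 0 < Q^-1 by rewrite invr_gt0.
set u := Q^-1 in uQ u0 *.
have : u * (1/2) <= u * (D*Q*P) by apply: ler_wpM2l => //; apply: ltW.
have e : u * (D * Q * P) = D * P by rewrite -(mul1r (D * P)) -uQ; ring.
rewrite e => h3.
have : 2 * D * P <= C * P by apply: ler_wpM2r.
lra.
Qed.

Lemma help2 (a b c X : R) : 0 < a -> 0 < b -> 0 < X -> X <= c * a * b -> a^-1 * b^-1 <= c * X^-1.
Proof.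
move=> ha hb hX h.
have ua : a^-1 * a = 1 by rewrite mulVf // gt_eqF.
have ub : b^-1 * b = 1 by rewrite mulVf // gt_eqF.
have ux : X^-1 * X = 1 by rewrite mulVf // gt_eqF.
have u0 : 0 < a^-1 * b^-1 * X^-1 by rewrite !mulr_gt0 // invr_gt0.
have := ler_wpM2l (ltW u0) h.
have -> : a^-1 * b^-1 * X^-1 * X = a^-1 * b^-1 by rewrite -mulrA ux mulr1.
have -> : a^-1 * b^-1 * X^-1 * (c * a * b) = c * X^-1.
  rewrite -[c * X^-1]mulr1 -[X in _ = _ * X]ua -[X in _ = _ * (_ * X)]mulr1 -[X in _ = _ * (_ * (_ * X))]ub; ring.
done.
Qed.

Lemma expn_mono (a b k : nat) : (a <= b)%N -> (a ^ k <= b ^ k)%N.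
Proof. by move=> h; elim: k => // k IH; rewrite !expnS leq_mul. Qed.

Theorem proposition1p3 :
  forall d : nat, exists C : R, 0 < C /\
    forall n : nat, C <= n%:R ->
    forall (G : zmodType) (N : 'I_d -> R) (w : 'I_d -> G) (v : 'I_n -> G) (mu : R),
      (forall i, 0 < N i) ->
      (forall j, in_GAP N w (v j)) ->
      0 < mu -> mu <= 1 ->
      let Qt := gap_card (gap_dilate (Num.sqrt (mu * n%:R)) N) w in
      ((Qt%:R)^-1 <= C * conc_prob mu v) /\
      ((Num.sqrt (1 + mu * n%:R) ^+ d)^-1 * ((gap_card N w)%:R)^-1 <= C * (Qt%:R)^-1).
Proof.
move=> d.
pose K := d.+1.
exists (2 * ((2 * d + 5) ^ d)%N%:R); split.
  by apply: mulr_gt0 => //; rewrite ltr0n expn_gt0; apply/orP; left; lia.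
move=> n Cn G N w v mu HN Hv mu0 mu1 Qt.
have Cge2 : 2 <= 2 * ((2 * d + 5) ^ d)%N%:R :> R.
  rewrite -[X in X <= _]mulr1 ler_wpM2l // (ler1n R) expn_gt0; apply/orP; left; lia.
have n1 : 1 <= n%:R :> R by lra.
have mun : 0 < mu * n%:R by apply: mulr_gt0; lra.
have t0 : 0 < Num.sqrt (mu * n%:R) by rewrite sqrtr_gt0.
have t2 : Num.sqrt (mu * n%:R) ^+ 2 = mu * n%:R by rewrite sqr_sqrtr // ltW.
set t := Num.sqrt (mu * n%:R) in t0 t2 *.
pose m j := proj1_sig (constructive_indefinite_description _ (Hv j)).
have hm j : (forall i, - N i <= (m j i)%:~R /\ (m j i)%:~R <= N i) /\ v j = gap_eval w (m j)
  := proj2_sig (constructive_indefinite_description _ (Hv j)).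
have HN0 i : 0 <= N i by apply: ltW.
have Qt0 : (0 < Qt)%N.
  by rewrite /Qt; apply: size_undup_gap_pos => i; rewrite /gap_dilate mulr_ge0 // ltW.
have Qtpos : 0 < Qt%:R :> R by rewrite ltr0n.
split.
- pose Xi (i : 'I_d) (e : {ffun 'I_n -> 'I_3}) : R := \sum_j (m j i)%:~R * etaR (e j).
  pose T (i : 'I_d) : R := (K%:R)^+2 * (mu * n%:R) * N i ^+ 2.
  have K0 : 0 < K%:R :> R by rewrite ltr0n.
  have T0 i : 0 < T i.
    by rewrite /T; apply: mulr_gt0; [apply: mulr_gt0 => //; exact: exprn_gt0 | exact: exprn_gt0].
  have EXi i : \sum_e W n mu e * Xi i e ^+ 2 <= T i / (K%:R)^+2.
    rewrite E2.
    have -> : T i / (K%:R)^+2 = mu * \sum_(j < n) N i ^+ 2.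
      rewrite sumr_const card_ord -[N i ^+ 2 *+ n]mulr_natr /T.
      have KK : (K%:R : R) ^+ 2 != 0 by rewrite expf_eq0 gt_eqF.
      rewrite mulrAC [_ * _ / _]mulrAC mulfV // mul1r; ring.
    apply: ler_wpM2l; first exact: ltW.
    apply: ler_sum => j _; have [a b] := (hm j).1 i; nra.
  have Hbad : \sum_(e | ~~ [forall i, Xi i e ^+ 2 <= T i]) W n mu e <= 1/2.
    apply: le_trans (@markov_union n d mu Xi T (ltW mu0) mu1 T0) _.
    apply: le_trans (_ : \sum_(i < d) ((K%:R : R) ^+ 2)^-1 <= _).
      apply: ler_sum => i _; rewrite ler_pdivrMr // mulrC.
      by apply: le_trans (EXi i) _; rewrite mulrC.
    rewrite sumr_const card_ord -[_ *+ d]mulr_natr.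
    have Kd : (K%:R : R) = d%:R + 1 by rewrite /K -addn1 natrD.
    have uK : ((K%:R : R) ^+ 2)^-1 * (K%:R ^+ 2) = 1 by rewrite mulVf // expf_eq0 gt_eqF.
    have u0 : 0 < ((K%:R : R) ^+ 2)^-1 by rewrite invr_gt0 exprn_gt0.
    move: uK u0; set u := ((K%:R : R) ^+ 2)^-1; rewrite Kd => uK u0.
    have d0 : 0 <= d%:R :> R by apply: ler0n.
    nra.
  have Hgood : 1/2 <= \sum_(e | [forall i, Xi i e ^+ 2 <= T i]) W n mu e.
    have := sumW n mu.
    rewrite (bigID (fun e => [forall i, Xi i e ^+ 2 <= T i])) /=; lra.
  pose N'' i := (K%:R : R) * (t * N i).
  have Hpig : \sum_(e | [forall i, Xi i e ^+ 2 <= T i]) W n mu e <=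
              (size (undup (gap_points N'' w)))%:R * conc_prob mu v.
    apply: pigeon (ltW mu0) mu1 (undup_uniq _) _ => e /forallP Hg.
    rewrite mem_undup; apply/mem_gap_points.
    exists (fun i => \sum_j m j i * eta_val (e j)); split; last first.
      by apply: walk_eq => j; case: (hm j).
    move=> i; have := Hg i.
    have -> : Xi i e = (\sum_j m j i * eta_val (e j))%:~R.
      rewrite rmorph_sum; apply: eq_bigr => j _ /=; by rewrite rmorphM.
    have -> : T i = N'' i ^+ 2 by rewrite /T /N'' -t2; ring.
    move=> h; apply: sq_bound => //.
    by rewrite /N'' !mulr_ge0 // ltW.
  have Hcov := @cover G d (gap_dilate t N) N'' w K isT
                 (fun i => mulr_ge0 (ltW t0) (HN0 i)) (fun i => lexx _).
  apply: (@help1 _ (((2 * K + 1) ^ d)%N%:R) (conc_prob mu v)) => //.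
  + exact: conc_ge0.
  + apply: le_trans Hgood _; apply: le_trans Hpig _.
    rewrite -natrM; apply: ler_wpM2r; first exact: conc_ge0.
    by rewrite ler_nat.
  + apply: ler_wpM2l; first by apply: ler0n.
    rewrite ler_nat.
    apply: expn_mono.
    by rewrite /K mulnSr -addnA leq_add2l.
- pose M := (absz (Num.floor t)).+1.
  have fl0 : 0 <= Num.floor t by rewrite floor_ge0 ltW.
  have HM : (M%:R : R) = (Num.floor t)%:~R + 1.
    by rewrite /M -addn1 natrD natr_absz ger0_norm.
  have tM : t <= M%:R by rewrite HM; have := floorD1_gt t; rewrite intrD => h; exact: ltW.
  have Mt : M%:R <= t + 1 by rewrite HM lerD2r floor_le.
  have Hcov := @cover G d N (gap_dilate t N) w M isT HN0
                 (fun i => ler_wpM2r (HN0 i) tM).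
  set s := Num.sqrt (1 + mu * n%:R).
  have s1 : 1 <= s by rewrite /s -{1}sqrtr1; apply: ler_wsqrtr; lra.
  have ts : t <= s by apply: ler_wsqrtr; lra.
  have Q0 : (0 < gap_card N w)%N by apply: size_undup_gap_pos.
  apply: help2.
  + by rewrite exprn_gt0 //; lra.
  + by rewrite ltr0n.
  + exact: Qtpos.
  + apply: le_trans (_ : (((2 * M + 1) ^ d)%N * gap_card N w)%N%:R <= _).
      by rewrite ler_nat.
    rewrite natrM; apply: ler_wpM2r; first exact: ler0n.
    have h5 : ((2 * M + 1)%N%:R : R) <= 5 * s.
      rewrite natrD natrM /=; lra.
    apply: le_trans (_ : (5 * s) ^+ d <= _).
      rewrite natrX; apply: lerXn2r => //; rewrite nnegrE ?ler0n //; lra.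
    rewrite exprMn ler_wpM2r ?exprn_ge0 //; first lra.
    rewrite -[5 ^+ d]/((5%:R : R) ^+ d) -natrX.
    apply: le_trans (_ : ((2 * d + 5) ^ d)%N%:R <= _).
      rewrite ler_nat; apply: expn_mono; exact: leq_addl.
    rewrite -[X in X <= _]mul1r ler_wpM2r //; lra.
Qed.
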